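(* Let $a,b\geq1$ and $P=[a]\times[b]$. For every $p=(i,j)\in P$, \[\mathbb{1}_p=\sum_{\substack{(i',j')\in P\\ i'\geq i,\ j'\geq j}}T^-_{(i',j')}\;-\;\sum_{\substack{(i',j')\in P\\ i'> i,\ j'> j}}T^+_{(i',j')}\] as functions $\mathcal{J}(P)\to\mathbb{R}$.
   Context: $[a]\times[b]=\{(i,j)\colon 1\le i\le a,\ 1\le j\le b\}$ with $(i,j)\le(i',j')$ iff $i\le i'$ and $j\le j'$. $\mathcal{J}(P)$ is the set of order ideals of $P$. For $x\in P$, $I\in\mathcal{J}(P)$: $\mathbb{1}_x(I)=1$ if $x\in I$, else $0$; $T_x^+(I)=1$ if $x$ is a minimal element of $P\setminus I$, else $0$; $T_x^-(I)=1$ if $x$ is a maximal element of $I$, else $0$. *)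

(* Defs.v *)
From mathcomp Require Import all_boot all_order all_algebra.
Set Implicit Arguments. Unset Strict Implicit. Unset Printing Implicit Defensive.
Import Order.TTheory GRing.Theory Num.Theory.

(* The poset [a] x [b], encoded 0-indexed: (i,j) : 'I_a * 'I_b stands for
   (i+1, j+1).  Product order. *)
Definition grid (a b : nat) := ('I_a * 'I_b)%type.

Definition gle (a b : nat) (x y : grid a b) : bool :=
  (x.1 <= y.1)%N && (x.2 <= y.2)%N.

Definition is_order_ideal (a b : nat) (I : {set grid a b}) : Prop :=
  forall x y : grid a b, y \in I -> gle x y -> x \in I.

Definition Tplus (a b : nat) (x : grid a b) (I : {set grid a b}) : bool :=
  (x \notin I) && [forall y : grid a b, ((y \notin I) && gle y x) ==> (y == x)].

Definition Tminus (a b : nat) (x : grid a b) (I : {set grid a b}) : bool :=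
  (x \in I) && [forall y : grid a b, ((y \in I) && gle x y) ==> (y == x)].

(* Main.v *)
Require Import Defs.
From mathcomp Require Import all_boot all_order all_algebra.
From mathcomp Require Import zify ring.
Import Order.TTheory GRing.Theory Num.Theory.
Local Open Scope ring_scope.

Section Aux.
Variables (n m : nat) (I : {set grid n.+1 m.+1}).
Hypothesis hI : is_order_ideal I.

Definition memb (i j : nat) : bool :=
  [&& (i <= n)%N, (j <= m)%N & ((@inord n i, @inord m j) : grid n.+1 m.+1) \in I].

Lemma memb_down i j i' j' : memb i j -> (i' <= i)%N -> (j' <= j)%N -> memb i' j'.
Proof.
case/and3P => hi hj hin hii hjj.
have hi' : (i' <= n)%N by apply: leq_trans hi.
have hj' : (j' <= m)%N by apply: leq_trans hj.
rewrite /memb hi' hj' /=.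
have := hI (@inord n i', @inord m j') _ hin; apply; rewrite /gle /= !inordK //.
by rewrite hii hjj.
Qed.

Lemma memb_val (q : grid n.+1 m.+1) : memb q.1 q.2 = (q \in I).
Proof.
case: q => i j /=.
have hi : (i <= n)%N := ltn_ord i.
have hj : (j <= m)%N := ltn_ord j.
by rewrite /memb hi hj !inord_val.
Qed.

Lemma Tminus_char (q : grid n.+1 m.+1) :
  Tminus q I = [&& q \in I, ~~ memb q.1.+1 q.2 & ~~ memb q.1 q.2.+1].
Proof.
case: q => i j /=; rewrite /Tminus /=.
case hq: ((i, j) \in I) => //=.
apply/forallP/andP.
- move=> H; split; apply/negP => /and3P [h1 h2 h3].
  + have := H (inord i.+1, inord j); rewrite h3 /gle /= !inordK //.
    rewrite leqnSn leqnn /= => /eqP /(congr1 (fun q : grid n.+1 m.+1 => val q.1)) /=.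
    rewrite inordK //; lia.
  + have := H (inord i, inord j.+1); rewrite h3 /gle /= !inordK //;
      try by rewrite ltnS.
    rewrite leqnSn leqnn /= => /eqP /(congr1 (fun q : grid n.+1 m.+1 => val q.2)) /=.
    rewrite inordK //; lia.
- case=> /negP n1 /negP n2 [y1 y2]; apply/implyP => /andP [hy]; rewrite /gle /=.
  case/andP => l1 l2.
  case: (ltngtP i y1) l1 => // c1 _.
  + exfalso; apply: n1; apply: (@memb_down y1 y2) => //.
    by rewrite (memb_val (y1, y2)).
  + case: (ltngtP j y2) l2 => // c2 _.
    * exfalso; apply: n2; apply: (@memb_down y1 y2) => //.
        by rewrite (memb_val (y1, y2)).
      by rewrite c1.
    * by apply/eqP; congr pair; apply: val_inj.
Qed.

Lemma Tplus_char (q : grid n.+1 m.+1) : (0 < q.1)%N -> (0 < q.2)%N ->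
  Tplus q I = [&& q \notin I, memb q.1.-1 q.2 & memb q.1 q.2.-1].
Proof.
case: q => i j /= p1 p2; rewrite /Tplus /=.
case hq: ((i, j) \in I) => //=.
have hi : (i.-1 <= n)%N by rewrite (leq_trans (leq_pred _)) // -ltnS.
have hj : (j.-1 <= m)%N by rewrite (leq_trans (leq_pred _)) // -ltnS.
have hi0 : (i <= n)%N by rewrite -ltnS.
have hj0 : (j <= m)%N by rewrite -ltnS.
apply/forallP/andP.
- move=> H; split; apply/negPn/negP.
  + rewrite /memb hi hj0 /= => h3.
    have := H (inord i.-1, inord j); rewrite h3 /gle /= !inordK //.
    rewrite leq_pred leqnn /= => /eqP /(congr1 (fun q : grid n.+1 m.+1 => val q.1)) /=.
    rewrite inordK //; lia.
  + rewrite /memb hj hi0 /= => h3.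
    have := H (inord i, inord j.-1); rewrite h3 /gle /= !inordK //.
    rewrite leq_pred leqnn /= => /eqP /(congr1 (fun q : grid n.+1 m.+1 => val q.2)) /=.
    rewrite inordK //; lia.
- case=> n1 n2 [y1 y2]; apply/implyP => /andP [hy]; rewrite /gle /=.
  case/andP => l1 l2.
  case: (ltngtP y1 i) l1 => // c1 _.
  + exfalso; move/negP: hy; apply; rewrite -(memb_val (y1, y2)) /=.
    apply: (@memb_down _ _ _ _ n1) => //; by rewrite -ltnS prednK.
  + case: (ltngtP y2 j) l2 => // c2 _.
    * exfalso; move/negP: hy; apply; rewrite -(memb_val (y1, y2)) /=.
      apply: (@memb_down _ _ _ _ n2) => //; first by rewrite c1.
      by rewrite -ltnS prednK.
    * by apply/eqP; congr pair; apply: val_inj.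
Qed.


Variable R : realFieldType.

Definition fv i j : R := (memb i j)%:R.
Definition tm i j : R := if (i <= n)%N && (j <= m)%N then
  (Tminus ((@inord n i, @inord m j) : grid n.+1 m.+1) I)%:R else 0.
Definition tp i j : R := if (i <= n)%N && (j <= m)%N then
  (Tplus ((@inord n i, @inord m j) : grid n.+1 m.+1) I)%:R else 0.

Lemma arith (x y z w : bool) : [&& y ==> x, z ==> x, w ==> y & w ==> z] ->
  ((x && ~~ y && ~~ z)%:R - (~~ w && z && y)%:R : R) = x%:R - y%:R - (z%:R - w%:R).
Proof.
by case: x; case: y; case: z; case: w => //= _; ring.
Qed.

Lemma local i j : (i <= n)%N -> (j <= m)%N ->
  tm i j - tp i.+1 j.+1 = fv i j - fv i.+1 j - (fv i j.+1 - fv i.+1 j.+1).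
Proof.
move=> hi hj.
have -> : tm i j = (memb i j && ~~ memb i.+1 j && ~~ memb i j.+1)%:R.
  have -> : memb i j = (((@inord n i, @inord m j) : grid n.+1 m.+1) \in I) by rewrite /memb hi hj.
  by rewrite /tm hi hj /= Tminus_char /= !inordK // andbA.
have -> : tp i.+1 j.+1 = (~~ memb i.+1 j.+1 && memb i j.+1 && memb i.+1 j)%:R.
  rewrite /tp; case: ifP => [/andP [hi1 hj1] | hn].
    rewrite Tplus_char /= ?inordK //.
    by rewrite andbA /memb hi1 hj1.
  have [hi1 | hi1] := boolP (i.+1 <= n)%N.
    have hj1 : (j.+1 <= m)%N = false by move: hn; rewrite hi1.
    by rewrite /memb hj1 !andbF.
  by rewrite /memb (negbTE hi1) /= !andbF.
apply: arith.
apply/and4P; split; apply/implyP => h.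
- by apply: (@memb_down _ _ _ _ h); rewrite ?leqnSn ?leqnn.
- by apply: (@memb_down _ _ _ _ h); rewrite ?leqnSn ?leqnn.
- by apply: (@memb_down _ _ _ _ h); rewrite ?leqnSn ?leqnn.
- by apply: (@memb_down _ _ _ _ h); rewrite ?leqnSn ?leqnn.
Qed.

End Aux.


Lemma sum_conv (R : realFieldType) (n m k l : nat) (F : nat -> nat -> R) :
  \sum_(q : grid n.+1 m.+1 | (k <= q.1)%N && (l <= q.2)%N) F q.1 q.2
  = \sum_(k <= i < n.+1) \sum_(l <= j < m.+1) F i j.
Proof.
transitivity (\sum_(i < n.+1 | (k <= i)%N) \sum_(j < m.+1 | (l <= j)%N) F i j).
  by rewrite pair_big_dep.
rewrite big_geq_mkord; apply: eq_big => // i _.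
by rewrite big_geq_mkord.
Qed.

Lemma shift0 (R : realFieldType) (G : nat -> R) k N : (k <= N)%N -> G N.+1 = 0 ->
  \sum_(k.+1 <= i < N.+1) G i = \sum_(k <= i < N.+1) G i.+1.
Proof.
move=> hk h0; rewrite big_add1 /= big_nat_recr //= h0 addr0.
by [].
Qed.

Lemma tele (R : realFieldType) (h : nat -> R) k N : (k <= N)%N ->
  \sum_(k <= i < N) (h i - h i.+1) = h k - h N.
Proof.
move=> hk; rewrite (telescope_sumr_eq (fun i => - h i)) //.
  by rewrite opprK addrC.
by move=> i _; rewrite opprK addrC.
Qed.

Theorem lemma3p8 (R : realFieldType) (a b : nat) (ha : (1 <= a)%N) (hb : (1 <= b)%N)
  (p : grid a b) (I : {set grid a b}) (hI : is_order_ideal I) :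
  ((p \in I)%:R : R) =
    \sum_(q : grid a b | (p.1 <= q.1)%N && (p.2 <= q.2)%N) ((Tminus q I)%:R : R)
  - \sum_(q : grid a b | (p.1 < q.1)%N && (p.2 < q.2)%N) ((Tplus q I)%:R : R).
Proof.
case: a ha p I hI => // n _; case: b hb => // m _ p I hI.
have Em : forall q : grid n.+1 m.+1, ((Tminus q I)%:R : R) = tm n m I R q.1 q.2.
  move=> [i j]; rewrite /tm /=.
  have hi : (i <= n)%N := ltn_ord i.
  have hj : (j <= m)%N := ltn_ord j.
  by rewrite hi hj !inord_val.
have Ep : forall q : grid n.+1 m.+1, ((Tplus q I)%:R : R) = tp n m I R q.1 q.2.
  move=> [i j]; rewrite /tp /=.
  have hi : (i <= n)%N := ltn_ord i.
  have hj : (j <= m)%N := ltn_ord j.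
  by rewrite hi hj !inord_val.
rewrite (eq_bigr _ (fun q _ => Em q)) (eq_bigr _ (fun q _ => Ep q)).
rewrite !sum_conv.
have hp1 : (p.1 <= n)%N := ltn_ord p.1.
have hp2 : (p.2 <= m)%N := ltn_ord p.2.
have tpn : forall j, tp n m I R n.+1 j = 0 by move=> j; rewrite /tp ltnn.
have tpm : forall i, tp n m I R i m.+1 = 0 by move=> i; rewrite /tp ltnn andbF.
have fvn : forall j, fv n m I R n.+1 j = 0 by move=> j; rewrite /fv /memb ltnn.
have fvm : forall i, fv n m I R i m.+1 = 0 by move=> i; rewrite /fv /memb ltnn andbF.
rewrite shift0 //; last by rewrite big1 // => j _; exact: tpn.
rewrite -sumrB.
rewrite (eq_big_nat _ _ (F2 := fun i => fv n m I R i p.2 - fv n m I R i.+1 p.2)).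
  rewrite tele; last exact: leqW hp1.
  rewrite fvn subr0 /fv.
  by rewrite (@memb_val n m I (p.1, p.2)) -surjective_pairing.
move=> i /andP [_ hi].
rewrite shift0 // -sumrB.
rewrite (eq_big_nat _ _ (F2 := fun j => (fv n m I R i j - fv n m I R i.+1 j) - (fv n m I R i j.+1 - fv n m I R i.+1 j.+1))).
  rewrite tele; last exact: leqW hp2.
  by rewrite !fvm subrr subr0.
move=> j /andP [_ hj].
by apply: local.
Qed.
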